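(* Let $\alpha,\beta,\gamma>0$ and set $\Omega=[0,1]$. For $x\in(0,1)$ and $y\in[0,1]$ define $$f(x,y)=-\left(\frac{1}{x(1-x)}\right)^{\gamma}-\alpha\exp\bigl(-\beta(x-y)\bigr),$$ and for a Borel probability measure $\mu$ on $[0,1]$ define the payoff $\varphi(x;\mu)=\int_{[0,1]} f(x,y)\,\mu(dy)$ for $x\in(0,1)$, with $\varphi(0;\mu)=\varphi(1;\mu)=-\infty$. Then the equation $$\frac{d}{dx}\left(\frac{1}{x(1-x)}\right)^{\gamma}=\alpha\beta$$ has a unique solution $x=\hat{x}\in(0,1)$. Moreover, the Dirac measure $\delta_{\{x=\hat x\}}$ is a pure Nash equilibrium of the game with payoff $\varphi$, i.e. $\hat x\in\arg\max_{x\in[0,1]}\varphi(x;\delta_{\{x=\hat x\}})$, and it is the only pure Nash equilibrium: if $z\in[0,1]$ satisfies $z\in\arg\max_{x\in[0,1]}\varphi(x;\delta_{\{x=z\}})$, then $z=\hat x$.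
   Context: This is a population game on the action space $\Omega=[0,1]$: a distribution of actions of agents is a Borel probability measure $\mu$ on $\Omega$, and an agent choosing action $x$ receives payoff $\varphi(x;\mu)$. A pure Nash equilibrium is a Dirac measure $\delta_{\{x=z\}}$ concentrated at a point $z\in\Omega$ such that $z$ maximizes $x\mapsto\varphi(x;\delta_{\{x=z\}})$ over $\Omega$. *)

(* Defs.v *)
From HB Require Import structures.
From mathcomp Require Import all_boot all_order all_algebra.
From mathcomp Require Import all_classical all_reals all_analysis.
Set Implicit Arguments. Unset Strict Implicit. Unset Printing Implicit Defensive.
Import Order.TTheory GRing.Theory Num.Theory.
Local Open Scope classical_set_scope.
Local Open Scope ring_scope.

Definition gfun {R : realType} (gamma : R) (x : R) : R :=
  (1 / (x * (1 - x))) `^ gamma.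

Definition ffun {R : realType} (alpha beta gamma : R) (x y : R) : R :=
  - gfun gamma x - alpha * expR (- (beta * (x - y))).

Definition payoff {R : realType} (alpha beta gamma : R)
  (x : R) (mu : {measure set R -> \bar R}) : \bar R :=
  if (0 < x) && (x < 1) then
    (\int[mu]_(y in `[0%R, 1%R]%classic) (ffun alpha beta gamma x y)%:E)%E
  else -oo%E.

Definition pure_NE {R : realType}
  (phi : R -> {measure set R -> \bar R} -> \bar R) (z : R) : Prop :=
  0 <= z <= 1 /\
  forall x : R, 0 <= x <= 1 -> (phi x (\d_z) <= phi z (\d_z))%E.

(* Main.v *)
Require Import Defs.
From HB Require Import structures.
From mathcomp Require Import all_boot all_order all_algebra.
From mathcomp Require Import all_classical all_reals all_analysis.
From mathcomp Require Import ring lra measurable_realfun.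
Import Order.TTheory GRing.Theory Num.Theory.
Local Open Scope classical_set_scope.
Local Open Scope ring_scope.

Module Helpers.
Import numFieldNormedType.Exports.
Section S.
Context {R : realType}.
Implicit Types x y : R.

Lemma dh x : is_derive x 1 (fun y : R => y * (1 - y)) (1 - 2 * x).
Proof.
have -> : (fun y : R => y * (1 - y)) = (id : R -> R) * (cst 1 - id).
  by apply/funext => y.
apply: is_derive_eq.
by rewrite /= /GRing.scale /= !fctE /= mulr1; lra.
Qed.

Lemma h_gt0 {x} : 0 < x < 1 -> 0 < x * (1 - x).
Proof. move=> /andP[x0 x1]; apply: mulr_gt0 => //; lra. Qed.

Lemma gE (g : R) x : 0 < x < 1 -> gfun g x = expR (- (g * ln (x * (1 - x)))).
Proof.
move=> /h_gt0 hp; rewrite /gfun /powR div1r invr_eq0 gt_eqF //.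
by rewrite lnV ?mulrN // posrE.
Qed.

Lemma dg (g : R) x : 0 < x < 1 ->
  is_derive x 1 (gfun g) (g * gfun g x * (2 * x - 1) / (x * (1 - x))).
Proof.
move=> x01; have hp := h_gt0 x01.
have E : gfun g = (@powR R ^~ g) \o (fun y : R => (y * (1 - y))^-1).
  by apply/funext => y; rewrite /gfun /= div1r.
have D : is_derive x 1 ((@powR R ^~ g) \o (fun y : R => (y * (1 - y))^-1))
   (g * ((x * (1 - x))^-1 `^ (g - 1)) * (- (x * (1 - x)) ^- 2 *: (1 - 2 * x))).
  apply: is_derive1_comp; first by apply: is_derive1_powR; rewrite invr_gt0.
  by apply: is_deriveV; [rewrite gt_eqF | exact: dh].
rewrite {1}E; apply: is_derive_eq D _.
rewrite /GRing.scale /=.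
have -> : (x * (1 - x))^-1 `^ (g - 1) = gfun g x * (x * (1 - x)).
  rewrite gE // /powR invr_eq0 gt_eqF // lnV ?posrE //.
  rewrite mulrBl mul1r mulrN opprK expRD lnK ?posrE //.
field. case/andP: x01 => ? ?; apply/andP; split; apply/eqP; lra.
Qed.
Lemma g_gt0 (g : R) x : 0 < x < 1 -> 0 < gfun g x.
Proof. by move=> x01; rewrite gE // expR_gt0. Qed.

Lemma tangent (g a x : R) : 0 < g -> 0 < a < 1 -> 0 < x < 1 ->
  gfun g a + g * gfun g a * (2 * a - 1) / (a * (1 - a)) * (x - a)
   + g * gfun g a * (x - a) ^+ 2 / (a * (1 - a)) <= gfun g x.
Proof.
move=> g0 a01 x01.
have hH := h_gt0 a01; have hK := h_gt0 x01.
have G0 := g_gt0 g a a01.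
set H := a * (1 - a) in hH *; set K := x * (1 - x) in hK *.
set G := gfun g a in G0 *.
set u := ln K - ln H.
have eu : ln (K / H) = u by rewrite lnM ?lnV ?posrE ?invr_gt0.
have e2 : u <= K / H - 1.
  rewrite -eu; have := expR_ge1Dx (ln (K / H)).
  rewrite lnK ?posrE ?divr_gt0 //; lra.
have e1 : G * (1 - g * u) <= gfun g x.
  have -> : gfun g x = G * expR (- (g * u)).
    by rewrite /G !gE // -expRD /u; congr expR; ring.
  rewrite ler_pM2l //; have := expR_ge1Dx (- (g * u)); lra.
apply: le_trans e1.
have -> : G + g * G * (2 * a - 1) / H * (x - a) + g * G * (x - a) ^+ 2 / H
   = G * (1 - g * (K / H - 1)).
  rewrite /K /H; field; case/andP: a01 => ? ?; apply/andP; split; apply/eqP; lra.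
have : 0 <= K / H - 1 - u by lra.
move=> /(mulr_ge0 (mulr_ge0 (ltW G0) (ltW g0))); nra.
Qed.
Lemma payoff_dirac (al be g x z : R) : 0 < x < 1 -> 0 <= z <= 1 ->
  payoff al be g x \d_z = (ffun al be g x z)%:E.
Proof.
move=> x01 z01; rewrite /payoff x01 integral_dirac.
  by rewrite diracE mem_set ?mul1e // in_itv.
  by []. apply: (@measurableT_comp _ _ _ _ _ _ EFin) => //; apply: measurable_funTS.
rewrite /ffun; apply: measurable_funB => //.
apply: measurable_funM => //.
apply: measurableT_comp => //.
apply: measurableT_comp => //; apply: measurable_funM => //; exact: measurable_funB.
Qed.

Lemma dD (g x : R) : 0 < x < 1 ->
  derive1 (gfun g) x = g * gfun g x * (2 * x - 1) / (x * (1 - x)).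
Proof. by move=> x01; rewrite derive1E; have [] := dg g x x01. Qed.

Lemma D_cont (g x : R) : 0 < x < 1 ->
  {for x, continuous (fun y : R => g * gfun g y * (2 * y - 1) / (y * (1 - y)))}.
Proof.
move=> x01; have hp := h_gt0 x01.
have gc : {for x, continuous (gfun g : R -> R)}.
  have [d _] := dg g x x01.
  exact/differentiable_continuous/derivable1_diffP.
apply: cvgM; last first.
  apply: cvgV; first by rewrite gt_eqF.
  apply: cvgM; first exact: cvg_id.
  apply: cvgB; [exact: cvg_cst | exact: cvg_id].
apply: cvgM; last first.
  apply: cvgB; [apply: cvgM; [exact: cvg_cst | exact: cvg_id] | exact: cvg_cst].
apply: cvgM; [exact: cvg_cst | exact: gc].
Qed.

Lemma dlin (be z t : R) : is_derive t 1 (fun y : R => - (be * (y - z))) (- be).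
Proof.
have -> : (fun y : R => - (be * (y - z))) = - (be \*: ((id : R -> R) - cst z)).
  by apply/funext => y.
apply: is_derive_eq.
by rewrite /GRing.scale /= subr0 mulr1.
Qed.

Lemma dF (al be g z t : R) : 0 < t < 1 ->
  is_derive t 1 (fun y : R => ffun al be g y z)
    (- (g * gfun g t * (2 * t - 1) / (t * (1 - t))) + al * be * expR (- (be * (t - z)))).
Proof.
move=> t01.
have -> : (fun y : R => ffun al be g y z) =
   - gfun g - al \*: (expR \o (fun y : R => - (be * (y - z)))).
  by apply/funext => y.
have E : is_derive t 1 (expR \o (fun y : R => - (be * (y - z))))
            (expR (- (be * (t - z))) * - be).
  apply: is_derive1_comp; exact: dlin.
have G := dg g t t01.
apply: is_derive_eq.
by rewrite /GRing.scale /=; ring.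
Qed.

Lemma D_within (g a b : R) : 0 < a -> b < 1 ->
  {within `[a, b], continuous (fun y : R => g * gfun g y * (2 * y - 1) / (y * (1 - y)))}.
Proof.
move=> a0 b1; apply: continuous_in_subspaceT => y.
rewrite inE /= in_itv /= => /andP[y1 y2].
apply: D_cont; apply/andP; split; lra.
Qed.
End S.
End Helpers.
Import Helpers.

Theorem mainTheorem1 (R : realType) (alpha beta gamma : R) :
  0 < alpha -> 0 < beta -> 0 < gamma ->
  exists xhat : R,
    [/\ 0 < xhat < 1,
        derive1 (gfun gamma) xhat = alpha * beta,
        (forall x : R, 0 < x < 1 -> derive1 (gfun gamma) x = alpha * beta -> x = xhat),
        pure_NE (payoff alpha beta gamma) xhat
      & forall z : R, pure_NE (payoff alpha beta gamma) z -> z = xhat].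
Proof.
move=> a0 b0 g0.
pose D := fun y : R => gamma * gfun gamma y * (2 * y - 1) / (y * (1 - y)).
have uniq : forall x y, 0 < x < 1 -> 0 < y < 1 ->
    D x = alpha * beta -> D y = alpha * beta -> x = y.
  move=> x y x01 y01 Dx Dy.
  have T1 := tangent _ _ _ g0 y01 x01; have T2 := tangent _ _ _ g0 x01 y01.
  rewrite -/(D y) Dy in T1; rewrite -/(D x) Dx in T2.
  apply/eqP; rewrite -subr_eq0; apply/negPn/negP => ne.
  have sq : 0 < (x - y) ^+ 2 by rewrite exprn_even_gt0 ?ne ?orbT.
  have sq' : 0 < (y - x) ^+ 2 by rewrite -sqrrN opprB.
  have P1 : 0 < gamma * gfun gamma y * (x - y) ^+ 2 / (y * (1 - y)).
    by apply: divr_gt0; [do 2 apply: mulr_gt0 => //; exact: g_gt0 | exact: h_gt0].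
  have P2 : 0 < gamma * gfun gamma x * (y - x) ^+ 2 / (x * (1 - x)).
    by apply: divr_gt0; [do 2 apply: mulr_gt0 => //; exact: g_gt0 | exact: h_gt0].
  lra.
pose c := Num.min (1 / 4) (gamma / (2 * (alpha * beta))).
have ab0 : 0 < alpha * beta by apply: mulr_gt0.
have c0 : 0 < c by rewrite lt_min; apply/andP; split; [lra | apply: divr_gt0 => //; lra].
have c14 : c <= 1 / 4 by rewrite ge_min lexx.
have c2 : c <= gamma / (2 * (alpha * beta)) by rewrite ge_min lexx orbT.
have c2' : c * (2 * (alpha * beta)) <= gamma.
  by rewrite -ler_pdivlMr ?mulr_gt0.
pose b := 1 - c.
have b01 : 0 < b < 1 by apply/andP; split; rewrite /b; lra.
have Db : alpha * beta <= D b.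
  have G1 : 1 <= gfun gamma b.
    rewrite gE //; have := expR_ge1Dx (- (gamma * ln (b * (1 - b)))).
    have : ln (b * (1 - b)) <= 0.
      apply: ln_le0; case/andP: b01 => ? ?; nra.
    move=> L; have : 0 <= gamma * - ln (b * (1 - b)) by apply: mulr_ge0; lra.
    rewrite mulrN; lra.
  rewrite /D ler_pdivlMr ?h_gt0 //.
  have hb : b * (1 - b) <= c by rewrite /b; nra.
  have e1 : alpha * beta * (b * (1 - b)) <= alpha * beta * c by rewrite ler_pM2l.
  have e2 : gamma / 2 <= gamma * gfun gamma b * (2 * b - 1).
    have w : 0 <= 2 * b - 1 by rewrite /b; lra.
    have G1p : 0 <= gfun gamma b - 1 by lra.
    have := mulr_ge0 (mulr_ge0 (ltW g0) w) G1p; rewrite /b in w *.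
    nra.
  lra.
have D12 : D (1 / 2) = 0 by rewrite /D; field.
have [xh xhI Dxh] : exists2 xh, xh \in `[1 / 2, b] & D xh = alpha * beta.
  apply: IVT.
  - rewrite /b; lra.
  - apply: D_within; rewrite /b; lra.
  - by rewrite D12; apply/andP; split; [rewrite ge_min ltW | rewrite le_max Db orbT].
have xh01 : 0 < xh < 1.
  by move: xhI b01; rewrite in_itv /= => /andP[? ?] /andP[? ?]; apply/andP; split; lra.
have xh01' : 0 <= xh <= 1 by case/andP: xh01 => ? ?; apply/andP; split; lra.
exists xh; split => //.
- by rewrite dD.
- by move=> x x01; rewrite dD // => Dx; exact: (uniq x xh x01 xh01 Dx Dxh).
- split => // x _.
  case: (boolP (0 < x < 1)) => xin; last by rewrite /payoff (negbTE xin) leNye.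
  rewrite !payoff_dirac // lee_fin /ffun subrr mulr0 oppr0 expR0 mulr1.
  have T := tangent _ _ _ g0 xh01 xin; rewrite -/(D xh) Dxh in T.
  have E : alpha * (1 + - (beta * (x - xh))) <= alpha * expR (- (beta * (x - xh))).
    by rewrite ler_pM2l // expR_ge1Dx.
  have P : 0 <= gamma * gfun gamma xh * (x - xh) ^+ 2 / (xh * (1 - xh)).
    apply: divr_ge0; last exact/ltW/h_gt0.
    apply: mulr_ge0; last exact: sqr_ge0.
    by apply: mulr_ge0; [exact: ltW | exact/ltW/g_gt0].
  lra.
- move=> z [z01 Hz].
  have zin : 0 < z < 1.
    apply/negPn/negP => zn.
    have h12 : 0 <= (1 / 2 : R) <= 1 by apply/andP; split; lra.
    have := Hz (1 / 2) h12.
    rewrite payoff_dirac //; last by apply/andP; split; lra.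
    by rewrite [X in (_ <= X)%E]/payoff (negbTE zn) leeNy_eq.
  have Fmax : forall t, t \in `]0, 1[ -> ffun alpha beta gamma t z <= ffun alpha beta gamma z z.
    move=> t; rewrite in_itv /= => t01.
    have t01' : 0 <= t <= 1 by case/andP: t01 => ? ?; apply/andP; split; lra.
    by have := Hz t t01'; rewrite !payoff_dirac // lee_fin.
  have M : is_derive z 1 (fun t => ffun alpha beta gamma t z) 0.
    apply: (@derive1_at_max R _ 0 1 z ler01) => //.
    + by move=> t; rewrite in_itv /= => t01; case: (dF alpha beta gamma z t t01).
  have [_ V0] := M.
  have [_ V1] := dF alpha beta gamma z z zin.
  rewrite V0 subrr mulr0 oppr0 expR0 mulr1 in V1.
  apply: (uniq z xh zin xh01 _ Dxh).
  rewrite /D; lra.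
Qed.
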